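(* If $0\le p<t\le 1$, then there exists a stake sequence $\gamma$ with $\pi(p,t)=\mathbf P(S_\gamma\ge t)$. Furthermore, for fixed $p$, the function $t\mapsto\pi(p,t)$ is left-continuous.
   Context: Let $\beta_1,\beta_2,\ldots$ be independent Bernoulli random variables with success probability $p$. A stake sequence is a sequence $\gamma=(c_1,c_2,\ldots)$ of non-negative reals with $c_1\ge c_2\ge\cdots$ and $\sum_i c_i=1$; write $S_\gamma=\sum_i c_i\beta_i$. For $0\le p\le t\le 1$ define $\pi(p,t)=\sup\{\mathbf P(S_\gamma\ge t)\mid \gamma \text{ a stake sequence}\}$. *)

(* Defs.v *)
From HB Require Import structures.
From mathcomp Require Import all_boot all_order all_algebra.
From mathcomp Require Import all_classical all_reals all_analysis.
Set Implicit Arguments. Unset Strict Implicit. Unset Printing Implicit Defensive.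
Import Order.TTheory GRing.Theory Num.Theory numFieldNormedType.Exports.
Local Open Scope classical_set_scope.
Local Open Scope ring_scope.

Definition mutually_independent (R : realType) (d : measure_display)
  (T : measurableType d) (P : probability T R) (b : nat -> T -> R) : Prop :=
  forall (s : seq nat) (A : nat -> set R),
    uniq s -> (forall i, measurable (A i)) ->
    P (\bigcap_(i in [set` s]) (b i @^-1` A i)) =
      (\prod_(i <- s) P (b i @^-1` A i))%E.

Definition bernoulli_seq (R : realType) (d : measure_display)
  (T : measurableType d) (P : probability T R) (p : R) (b : nat -> T -> R) : Prop :=
  [/\ (forall i, measurable_fun setT (b i)),
      (forall i x, b i x = 0 \/ b i x = 1),
      (forall i, P (b i @^-1` [set 1]) = p%:E)
    & mutually_independent P b].

(* stake sequence: non-negative, non-increasing, summing to 1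
   (indexed from 0 instead of 1) *)
Definition stake_seq (R : realType) (c : nat -> R) : Prop :=
  [/\ (forall i, 0 <= c i),
      (forall i, c i.+1 <= c i)
    & series c @ \oo --> (1:R)].

(* S_gamma = sum_i c_i b_i  (as an extended real; the series has
   non-negative terms) *)
Definition stake_sum (R : realType) (T : Type) (c : nat -> R)
  (b : nat -> T -> R) (x : T) : \bar R :=
  (\sum_(0 <= i <oo) (c i * b i x)%:E)%E.

Definition win_prob (R : realType) (d : measure_display) (T : measurableType d)
  (P : probability T R) (b : nat -> T -> R) (c : nat -> R) (t : R) : \bar R :=
  P [set x | (t%:E <= stake_sum c b x)%E].

Definition pi_fun (R : realType) (d : measure_display) (T : measurableType d)
  (P : probability T R) (b : nat -> T -> R) (t : R) : \bar R :=
  ereal_sup [set win_prob P b c t | c in [set c | stake_seq c]].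

(* Main.v *)
Require Import Defs.
From HB Require Import structures.
From mathcomp Require Import all_boot all_order all_algebra.
From mathcomp Require Import all_classical all_reals all_analysis.
From mathcomp Require Import ring lra.
Import Order.TTheory GRing.Theory Num.Theory numFieldNormedType.Exports.
Local Open Scope classical_set_scope.
Local Open Scope ring_scope.

Module Aux.
Set Implicit Arguments. Unset Strict Implicit. Unset Printing Implicit Defensive.
Section Basics.
Context (R : realType).
Implicit Types (c : nat -> R).

Lemma series_le_lim c L : (forall i, 0 <= c i) -> series c @ \oo --> L ->
  forall n, series c n <= L.
Proof.
move=> c0 hc n.
have nd : {homo series c : n m / (n <= m)%N >-> n <= m}.
  by move=> m k mk; apply: (nondecreasing_series (P := xpredT) (m := 0%N)) => //.
have := nondecreasing_cvgn_le nd (cvgP _ hc) n.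
by rewrite (cvg_lim _ hc).
Qed.

Lemma seriesSp c m n : (m <= n)%N ->
  series c n = series c m + \sum_(m <= i < n) c i.
Proof. by move=> mn; rewrite /series /= (big_cat_nat (leq0n m) mn). Qed.

Context (T : Type) (b : nat -> T -> R) (b01 : forall i x, 0 <= b i x <= 1).

Definition Xs c M x := \sum_(0 <= i < M) c i * b i x.

Lemma XsD c m n x : (m <= n)%N ->
  Xs c n x = Xs c m x + \sum_(m <= i < n) c i * b i x.
Proof. by move=> mn; rewrite /Xs (big_cat_nat (leq0n m) mn). Qed.

Lemma Xs_le c m n x : (forall i, 0 <= c i) -> (m <= n)%N -> Xs c m x <= Xs c n x.
Proof.
move=> c0 mn; rewrite (XsD c x mn) lerDl; apply: sumr_ge0 => i _.
by apply: mulr_ge0 => //; case/andP: (b01 i x).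
Qed.

Lemma stake_sum_ge c M x : (forall i, 0 <= c i) ->
  ((Xs c M x)%:E <= stake_sum c b x)%E.
Proof.
move=> c0; rewrite /stake_sum /Xs -sumEFin.
apply: nneseries_lim_ge => n _ _; rewrite lee_fin.
by apply: mulr_ge0 => //; case/andP: (b01 n x).
Qed.

Lemma stake_sum_le c L M x : (forall i, 0 <= c i) -> series c @ \oo --> L ->
  (stake_sum c b x <= (Xs c M x + (L - series c M))%:E)%E.
Proof.
move=> c0 hc; rewrite /stake_sum; apply: lime_le.
  by apply: is_cvg_nneseries => n _ _; rewrite lee_fin; apply: mulr_ge0 => //; case/andP: (b01 n x).
apply: nearW => n; rewrite sumEFin lee_fin.
have h1 : \sum_(0 <= i < n) c i * b i x <= Xs c (maxn n M) x.
  by apply: (Xs_le x c0); rewrite leq_maxl.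
apply: (le_trans h1); rewrite (XsD c x (leq_maxr n M)) lerD2l.
apply: (@le_trans _ _ (\sum_(M <= i < maxn n M) c i)).
  apply: ler_sum => i _; rewrite -[leRHS]mulr1; apply: ler_wpM2l => //.
  by case/andP: (b01 i x).
rewrite lerBrDl -(seriesSp c (leq_maxr n M)).
exact: series_le_lim.
Qed.
End Basics.
Section Clu.
Import ArrowAsProduct.
Lemma cluster_seq (R : realType) (u : nat -> nat -> R) :
  (forall n i, 0 <= u n i <= 1) ->
  exists c : nat -> R, (forall i, 0 <= c i <= 1) /\
   forall (N : nat) (eta : R), 0 < eta -> forall n0 : nat,
    exists n, (n0 <= n)%N /\ forall i, (i < N)%N -> `|u n i - c i| < eta.
Proof.
move=> u01.
have K := @tychonoff nat (fun _ => R) (fun _ => `[0, 1]%classic) (fun _ => @segment_compact R 0 1).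
pose F := ((fun n => (u n : forall i : nat, R)) @ \oo).
have PF : ProperFilter F by apply: fmap_proper_filter.
have [|c [Ac clc]] := K F PF.
  by exists 0%N => // n _ i /=; rewrite in_itv /= u01.
exists c; split.
  by move=> i; have := Ac i; rewrite /= in_itv.
move=> N eta eta0 n0.
pose B := [set f : forall i : nat, R | forall i, (i < N)%N -> `|f i - c i| < eta].
have nB : nbhs c B.
  rewrite {}/B; elim: N => [|N IH].
    by apply: filterS filterT => f _ i.
  have hN := @proj_continuous nat (fun _ => R) N c (ball (c N) eta) (nbhsx_ballx _ _ eta0).
  apply: filterS (filterI IH hN) => f [h1 h2] i; rewrite ltnS leq_eqVlt => /orP[/eqP->|/h1//].
  by move: h2; rewrite /ball /= distrC.
have := clc (fun f => exists2 n, (n0 <= n)%N & f = u n) B _ nB.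
case.
  by exists n0 => // n /= h; exists n.
move=> f [[n hn ->] hB]; exists n; split => //.
Qed.
End Clu.

Section Prob.
Context (R : realType) (d : measure_display) (T : measurableType d)
  (P : probability T R) (p : R) (b : nat -> T -> R).
Hypothesis hb : bernoulli_seq P p b.
Hypothesis p0 : 0 <= p.

Lemma mb i : measurable_fun setT (b i).
Proof. by case: hb => h _ _ _; apply: h. Qed.

Lemma b01' i x : b i x = 0 \/ b i x = 1.
Proof. by case: hb => _ h _ _; apply: h. Qed.

Lemma b01 i x : 0 <= b i x <= 1.
Proof. by case: (b01' i x) => ->; rewrite lexx ?ler01. Qed.

Definition Aset i := b i @^-1` [set 1].

Lemma mA i : measurable (Aset i).
Proof. by have := @mb i measurableT _ (measurable_set1 (1:R)); rewrite setTI. Qed.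

Lemma PA i : P (Aset i) = p%:E.
Proof. by case: hb => _ _ h _; apply: h. Qed.

Lemma bE i x : b i x = \1_(Aset i) x.
Proof.
rewrite indicE /Aset; case: (b01' i x) => h; rewrite h.
  by rewrite memNset //= h => /esym/eqP; rewrite oner_eq0.
by rewrite mem_set.
Qed.

Lemma p_le1 : p <= 1.
Proof. by have := probability_le1 P (mA 0); rewrite PA lee_fin. Qed.

Lemma PAA i j : i != j -> P (Aset i `&` Aset j) = (p * p)%:E.
Proof.
move=> ij; case: hb => _ _ _ ind.
have u : uniq [:: i; j] by rewrite /= inE ij.
have := ind [:: i; j] (fun _ => [set 1]) u (fun _ => measurable_set1 _).
rewrite !big_cons big_nil mule1 -!/(Aset _) !PA -EFinM => <-.
congr (P _); apply/seteqP; split => x /=.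
  by move=> [h1 h2] k; rewrite /= !inE => /orP[/eqP->|/eqP->].
by move=> h; split; apply: h; rewrite /= !inE eqxx ?orbT.
Qed.

Lemma mge (f : T -> R) a : measurable_fun setT f -> measurable [set x | a <= f x].
Proof.
move=> mf; have := mf measurableT (`[a, +oo[%classic) (measurable_itv _).
by rewrite setTI; congr measurable; apply/seteqP; split => x /=; rewrite in_itv /= andbT.
Qed.

Lemma intg (h : T -> R) (K : R) : measurable_fun setT h -> (forall x, `|h x| <= K) ->
  P.-integrable setT (EFin \o h).
Proof.
move=> mh hK; apply: measurable_bounded_integrable => //.
  by apply: le_lt_trans (probability_le1 P measurableT) _; rewrite ltry.
rewrite /bounded_near; near=> M => x _ /=; apply: le_trans (hK x) _.
near: M; apply: nbhs_pinfty_ge; exact: num_real.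
Unshelve. all: end_near.
Qed.

Lemma mindic A : measurable A -> measurable_fun setT (\1_A : T -> R).
Proof. by move=> mA'; apply: measurable_realfun.measurable_indic. Qed.

Lemma indic_le1 (A : set T) x : `|(\1_A x : R)| <= 1.
Proof. by rewrite indicE; case: (_ \in _); rewrite ?normr1 ?normr0 ?ler01. Qed.

Lemma intg_indic (A : set T) k : measurable A -> P.-integrable setT (EFin \o (fun x => k * \1_A x)).
Proof.
move=> mA'; apply: (@intg _ `|k|).
  by apply: measurable_realfun.measurable_funM => //; exact: measurable_realfun.measurable_indic.
by move=> x; rewrite normrM -[leRHS]mulr1 ler_wpM2l // indic_le1.
Qed.

Lemma int_aff (A : set T) a k (g : T -> R) (K : R) : measurable A -> P A = a%:E ->
  measurable_fun setT g -> (forall x, `|g x| <= K) ->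
  (\int[P]_x ((k * \1_A x + g x)%:E) = (k * a)%:E + \int[P]_x (g x)%:E)%E.
Proof.
move=> mA' PA' mg hg.
rewrite (_ : (fun x => (k * \1_A x + g x)%:E) = (EFin \o (fun x => k * \1_A x)) \+ (EFin \o g)); last first.
  by apply/funext => x; rewrite /= EFinD.
rewrite integralD_EFin //; [|exact: intg_indic|exact: intg hg].
congr (_ + _)%E.
rewrite (_ : (EFin \o (fun x => k * \1_A x)) = (fun x => k%:E * (\1_A x)%:E)%E); last first.
  by apply/funext => x; rewrite /= EFinM.
rewrite integralZl //; last by apply: integrable_indic.
rewrite integral_indic // setIT EFinM; congr (_ * _)%E; exact: PA'.
Qed.

Lemma int_lin3 (A B C : set T) a b' c k1 k2 k3 k4 :
  measurable A -> measurable B -> measurable C ->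
  P A = a%:E -> P B = b'%:E -> P C = c%:E ->
  (\int[P]_x ((k1 * \1_A x + (k2 * \1_B x + (k3 * \1_C x + k4)))%:E)
   = (k1 * a + (k2 * b' + (k3 * c + k4)))%:E)%E.
Proof.
move=> mA' mB mC hA hB hC.
have mc : measurable_fun setT (fun _ : T => k4) by exact: measurable_cst.
have mI (D : set T) (k : R) : measurable D -> measurable_fun setT (fun x => k * \1_D x).
  by move=> mD; apply: measurable_realfun.measurable_funM => //; exact: measurable_realfun.measurable_indic.
have bI (D : set T) (k : R) x : `|k * \1_D x| <= `|k|.
  by rewrite normrM -[leRHS]mulr1 ler_wpM2l // indic_le1.
rewrite (@int_aff A a k1 _ (`|k2| + (`|k3| + `|k4|))) //; last 2 first.
- apply: measurable_realfun.measurable_funD; first exact: mI.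
  by apply: measurable_realfun.measurable_funD; [exact: mI|].
- move=> x; apply: (le_trans (ler_normD _ _)); apply: lerD => //.
  apply: (le_trans (ler_normD _ _)); exact: lerD.
rewrite (@int_aff B b' k2 _ (`|k3| + `|k4|)) //; last 2 first.
- by apply: measurable_realfun.measurable_funD; [exact: mI|].
- by move=> x; apply: (le_trans (ler_normD _ _)); apply: lerD.
rewrite (@int_aff C c k3 _ `|k4|) //.
rewrite integral_cst //.
have -> : (k4%:E * P setT = k4%:E)%E.
  by rewrite -[RHS]mule1; congr (_ * _)%E; exact: probability_setT.
by rewrite -!EFinD.
Qed.

Lemma int_pair i j c1 :
  (\int[P]_x ((c1 * ((b i x - p) * (b j x - p)))%:E)
   = (c1 * (if i == j then p * (1 - p) else 0))%:E)%E.
Proof.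
case: eqVneq => [<-|ij].
  rewrite (eq_integral (fun x => ((c1 * (1 - 2 * p)) * \1_(Aset i) x + (0 * \1_(Aset i) x
     + (0 * \1_(Aset i) x + c1 * (p * p))))%:E)); last first.
    move=> x _; rewrite bE; congr (_%:E).
    set u := \1_(Aset i) x.
    have uu : u * u = u by rewrite /u -[in RHS](setIid (Aset i)) indicI.
    have -> : (u - p) * (u - p) = u * u - 2 * p * u + p * p by ring.
    by rewrite uu; ring.
  rewrite (@int_lin3 _ _ _ p p p) ?PA //; try exact: mA.
  by congr (_%:E); ring.
rewrite (eq_integral (fun x => (c1 * \1_(Aset i `&` Aset j) x + ((- c1 * p) * \1_(Aset i) x
     + ((- c1 * p) * \1_(Aset j) x + c1 * (p * p))))%:E)); last first.
  by move=> x _; rewrite !bE indicI /=; congr (_%:E); ring.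
rewrite (@int_lin3 _ _ _ (p * p) p p) ?PA ?PAA //; try exact: mA.
  by congr (_%:E); ring.
by apply: measurableI; exact: mA.
Qed.

Lemma bp_le1 i x : `|b i x - p| <= 1.
Proof.
have := b01 i x; have := p_le1; rewrite ler_norml => h1 /andP[h2 h3].
apply/andP; split; first by rewrite -[-1]sub0r lerB.
by rewrite -[1]subr0 lerB.
Qed.

Lemma mbp i : measurable_fun setT (fun x => b i x - p).
Proof. by apply: measurable_realfun.measurable_funB; [exact: mb|exact: measurable_cst]. Qed.

Lemma int_sq N M c :
  (\int[P]_x (((\sum_(N <= i < M) c i * (b i x - p)) ^+ 2)%:E)
   = ((p * (1 - p)) * \sum_(N <= i < M) c i ^+ 2)%:E)%E.
Proof.
pose g i j x := c i * c j * ((b i x - p) * (b j x - p)).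
have mg i j : measurable_fun setT (g i j).
  apply: measurable_realfun.measurable_funM; first exact: measurable_cst.
  by apply: measurable_realfun.measurable_funM; exact: mbp.
have bg i j x : `|g i j x| <= `|c i * c j|.
  rewrite /g normrM -[leRHS]mulr1 ler_wpM2l // normrM.
  by rewrite -[1]mulr1 ler_pM // bp_le1.
rewrite (eq_integral (fun x => \sum_(N <= i < M) (\sum_(N <= j < M) g i j x)%:E)); last first.
  move=> x _; rewrite sumEFin; congr (_%:E).
  rewrite expr2 mulr_suml; apply: eq_bigr => i _; rewrite mulr_sumr.
  by apply: eq_bigr => j _; rewrite /g; ring.
rewrite integral_sum //; last first.
  move=> i; apply: (@intg _ (\sum_(N <= j < M) `|c i * c j|)).
    by apply: measurable_sum => j; exact: mg.
  move=> x; apply: (le_trans (ler_norm_sum _ _ _)); apply: ler_sum => j _; exact: bg.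
rewrite big_distrr /= -sumEFin; apply: eq_big_nat => i hi.
under eq_integral do rewrite -sumEFin.
rewrite integral_sum //; last first.
  by move=> j; apply: (@intg _ `|c i * c j|) => // x; exact: bg.
under eq_bigr do rewrite /g int_pair.
rewrite sumEFin; congr (_%:E).
rewrite (bigD1_seq i) /=; last 2 first.
- by rewrite mem_index_iota.
- exact: iota_uniq.
rewrite eqxx big1 ?addr0; first by ring.
by move=> j /negbTE; rewrite eq_sym => ->; rewrite mulr0.
Qed.

Lemma cheb N M c (e : R) : 0 < e ->
  (P [set x | (e <= \sum_(N <= i < M) c i * (b i x - p))%R]
   <= ((e ^- 2) * \sum_(N <= i < M) c i ^+ 2)%:E)%E.
Proof.
move=> e0.
set Y := fun x => \sum_(N <= i < M) c i * (b i x - p).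
have mY : measurable_fun setT Y.
  apply: measurable_sum => i; apply: measurable_realfun.measurable_funM.
    exact: measurable_cst.
  exact: mbp.
set A := [set x | e <= Y x].
have mA' : measurable A by exact: mge.
rewrite EFinM lee_pdivlMl ?exprn_gt0 //.
apply: (@le_trans _ _ (\int[P]_x ((Y x ^+ 2)%:E))%E); last first.
  rewrite /Y int_sq lee_fin; apply: ler_piMl.
    by apply: sumr_ge0 => i _; exact: sqr_ge0.
  have := p_le1; move=> h1; nra.
apply: (@le_trans _ _ ((e ^+ 2)%:E * \int[P]_x (\1_A x)%:E)%E).
  by rewrite le_eqVlt; apply/orP; left; apply/eqP; congr (_ * _)%E; rewrite integral_indic // setIT.
rewrite -integralZl //; last exact: integrable_indic.
apply: ge0_le_integral => //.
- by move=> x _; rewrite -EFinM lee_fin mulr_ge0 ?sqr_ge0 // indicE ler0n.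
- apply: emeasurable_funM; first exact: measurable_cst.
  by apply/measurable_realfun.measurable_EFinP; exact: measurable_realfun.measurable_indic.
- by apply/measurable_realfun.measurable_EFinP; apply: measurable_realfun.measurable_funX.
move=> x _; rewrite -EFinM lee_fin indicE.
case: (boolP (x \in A)) => [/set_mem xA|_]; last by rewrite mulr0 sqr_ge0.
rewrite mulr1 ler_sqr ?nnegrE //; first exact: ltW.
exact: le_trans (ltW e0) xA.
Qed.

Lemma mS c y : (forall i, 0 <= c i) -> measurable [set x | (y <= stake_sum c b x)%E].
Proof.
move=> c0; have := @measurable_realfun.emeasurable_fun_c_infty _ _ _ setT (stake_sum c b) measurableT _ y.
rewrite setTI; apply; rewrite /stake_sum.
apply: (@ge0_emeasurable_sum _ _ _ setT (fun i x => (c i * b i x)%:E) xpredT).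
  by move=> k x _ _; rewrite lee_fin mulr_ge0 // (andP (b01 k x)).1.
move=> k _; apply/measurable_realfun.measurable_EFinP.
apply: measurable_realfun.measurable_funM; first exact: measurable_cst.
exact: mb.
Qed.

Lemma stake_mono (c : nat -> R) : stake_seq c -> forall i j, (i <= j)%N -> c j <= c i.
Proof.
case=> _ hm _ i j ij; elim: j ij => [|j IH]; first by rewrite leqn0 => /eqP->.
rewrite leq_eqVlt => /orP[/eqP<-//|]; rewrite ltnS => /IH; exact: le_trans (hm j).
Qed.

Lemma sumB (c : nat -> R) m n x : \sum_(m <= i < n) c i * (b i x - p) =
  \sum_(m <= i < n) c i * b i x - p * \sum_(m <= i < n) c i.
Proof. by rewrite mulr_sumr -sumrB; apply: eq_bigr => i _; ring. Qed.

Lemma tail_bound (c : nat -> R) t (e : R) N : stake_seq c -> 0 < e ->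
  (win_prob P b c t <= P [set x | (t - 2 * e <= p + \sum_(0 <= i < N) c i * (b i x - p))%R]
     + ((e ^- 2) * c N)%:E)%E.
Proof.
move=> hc e0; have hc' := hc; case: hc' => c0 cm c1.
have [M [NM rM]] : exists M, (N <= M)%N /\ 1 - series c M <= e.
  move/cvgrPdist_lt: c1 => /(_ e e0) [n0 _ hn0].
  exists (maxn N n0); split; first exact: leq_maxl.
  have := hn0 (maxn N n0) (leq_maxr _ _) => /= h.
  exact: ltW (le_lt_trans (ler_norm _) h).
have sle := series_le_lim c0 c1.
set E1 := [set x | (t - 2 * e <= p + \sum_(0 <= i < N) c i * (b i x - p))%R].
set E2 := [set x | (e <= \sum_(N <= i < M) c i * (b i x - p))%R].
have mE1 : measurable E1.
  apply: mge; apply: measurable_realfun.measurable_funD; first exact: measurable_cst.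
  apply: measurable_sum => i; apply: measurable_realfun.measurable_funM.
    exact: measurable_cst.
  exact: mbp.
have mE2 : measurable E2.
  apply: mge; apply: measurable_sum => i; apply: measurable_realfun.measurable_funM.
    exact: measurable_cst.
  exact: mbp.
have sub : [set x | (t%:E <= stake_sum c b x)%E] `<=` E1 `|` E2.
  move=> x /= hx.
  have := le_trans hx (stake_sum_le b01 M x c0 c1); rewrite lee_fin => h1.
  case: (boolP (e <= \sum_(N <= i < M) c i * (b i x - p))) => [h|]; first by right.
  rewrite -ltNge => h4; left; rewrite /E1 /=.
  move: h1 h4; rewrite (XsD b c x NM) !sumB /Xs (seriesSp c NM) /series /=.
  have := sle M; rewrite (seriesSp c NM) /series /=.
  set sN := \sum_(0 <= i < N) c i; set sNM := \sum_(N <= i < M) c i.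
  set XN := \sum_(0 <= i < N) c i * b i x; set Z := \sum_(N <= i < M) c i * b i x.
  move=> h6 h1 h4.
  have h7 : p * (sN + sNM) <= p by rewrite -[leRHS]mulr1 ler_wpM2l.
  rewrite (seriesSp c NM) /series /= -/sN -/sNM in rM.
  move: h7; rewrite mulrDr => h7.
  lra.
apply: (le_trans (le_measure P _ _ sub)); rewrite ?inE.
- exact: mS.
- exact: measurableU.
apply: (le_trans (measureU2 P mE1 mE2)); rewrite leeD2l //.
apply: (le_trans (cheb N M c e0)); rewrite lee_fin ler_wpM2l ?invr_ge0 ?exprn_ge0 ?(ltW e0) //.
apply: (@le_trans _ _ (c N * \sum_(N <= i < M) c i)).
  rewrite mulr_sumr; apply: ler_sum_nat => i /andP[Ni _].
  by rewrite expr2 ler_wpM2r // stake_mono.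
rewrite -[leRHS]mulr1 ler_wpM2l //.
have := sle M; rewrite (seriesSp c NM); have : 0 <= series c N.
  by apply: sumr_ge0 => i _.
lra.
Qed.

Lemma stake_small (c : nat -> R) N : stake_seq c -> c N <= harmonic N.
Proof.
move=> hc; have hc' := hc; case: hc' => c0 cm c1.
have h : N.+1%:R * c N <= series c N.+1.
  rewrite /series /= mulr_natl -[in X in X <= _](subn0 N.+1) -sumr_const_nat.
  by apply: ler_sum_nat => i /andP[_ iN]; exact: (@stake_mono c hc i N iN).
have := le_trans h (series_le_lim c0 c1 N.+1).
by rewrite /harmonic /= -ler_pdivlMl ?ltr0Sn // mulr1.
Qed.

Lemma harmonic_le1 n : harmonic n <= 1 :> R.
Proof. by rewrite /harmonic /= invf_le1 ?ltr0Sn // ler1n. Qed.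

Lemma cont_above (c : nat -> R) (tau a : R) : (forall i, 0 <= c i) ->
  (forall k, (a%:E <= P [set x | ((tau - harmonic k)%:E <= stake_sum c b x)%E]
      + (harmonic k)%:E)%E) ->
  (a%:E <= P [set x | (tau%:E <= stake_sum c b x)%E])%E.
Proof.
move=> c0 h.
pose F k := [set x | ((tau - harmonic k)%:E <= stake_sum c b x)%E].
have mF k : measurable (F k) by exact: mS.
have FG : \bigcap_k F k = [set x | (tau%:E <= stake_sum c b x)%E].
  apply/seteqP; split => x /=; last first.
    move=> hx k _; apply: le_trans hx; rewrite lee_fin lerBlDr lerDl.
    exact: harmonic_ge0.
  move=> hx; apply/lee_addgt0Pr => e e0.
  have /cvgrPdist_lt /(_ e e0) [k0 _ hk0] := @cvg_harmonic R.
  have := hk0 k0 (leqnn k0); rewrite /= sub0r normrN ger0_norm ?harmonic_ge0 // => hk.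
  apply: (@le_trans _ _ ((tau - harmonic k0)%:E + (harmonic k0)%:E)%E).
    by rewrite -EFinD subrK.
  by rewrite leeD // ?(hx k0) // lee_fin ltW.
have ni : nonincreasing_seq F.
  move=> m n mn; apply/subsetPset => x /=; apply: le_trans; rewrite lee_fin lerB //.
  by rewrite /harmonic /= lef_pV2 ?posrE ?ltr0Sn // ler_nat.
have cv := nonincreasing_cvg_mu (mu := P) (F := F) _ mF _ ni.
rewrite -FG; have -> : P (\bigcap_k F k) = (P (\bigcap_k F k) + 0)%E by rewrite adde0.
have mG : measurable (\bigcap_k F k) by exact: bigcapT_measurable.
have hcv : ((fun k => P (F k) + (harmonic k)%:E)%E @ \oo --> (P (\bigcap_k F k) + 0)%E).
  apply: cvgeD; last exact: cvge_harmonic.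
    by rewrite fin_num_adde_defl.
  apply: cv => //; apply: le_lt_trans (probability_le1 P (mF 0)) _; exact: ltry.
rewrite -(cvg_lim _ hcv) //; apply: lime_ge; first exact: cvgP hcv.
by apply: nearW => k; exact: h.
Qed.

Lemma scale_stake (c : nat -> R) (s : R) : 0 < s -> (forall i, 0 <= c i) ->
  (forall i, c i.+1 <= c i) -> series c @ \oo --> s -> stake_seq (fun i => c i / s).
Proof.
move=> s0 c0 cm hs; split.
- by move=> i; rewrite divr_ge0 // ltW.
- by move=> i; rewrite ler_pM2r ?invr_gt0.
have -> : series (fun i => c i / s) = (fun n => series c n * s^-1).
  by apply/funext => n; rewrite /series /= mulr_suml.
by rewrite -(divff (lt0r_neq0 s0)); apply: cvgMl.
Qed.

Lemma scale_sub (c : nat -> R) (s tau t : R) : 0 < s -> (forall i, 0 <= c i) ->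
  s * t <= tau ->
  [set x | (tau%:E <= stake_sum c b x)%E] `<=`
  [set x | (t%:E <= stake_sum (fun i => (c i / s)%R) b x)%E].
Proof.
move=> s0 c0 st x /= hx.
have -> : stake_sum (fun i => (c i / s)%R) b x =
    (\sum_(0 <= i <oo) ((s^-1)%:E * (c i * b i x)%R%:E))%E.
  rewrite /stake_sum; congr (lim (_ @ \oo)); apply/funext => n.
  by apply: eq_bigr => i _; rewrite -EFinM; congr (_%:E); ring.
rewrite nneseriesZl; last first.
  by move=> i _; rewrite lee_fin mulr_ge0 // (andP (b01 i x)).1.
rewrite lee_pdivlMl // -EFinM; apply: le_trans hx; by rewrite lee_fin.
Qed.

Lemma zero_case (c : nat -> R) t : (forall i, 0 <= c i) ->
  series c @ \oo --> 0 -> 0 < t -> P [set x | (t%:E <= stake_sum c b x)%E] = 0%E.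
Proof.
move=> c0 hs t0.
have cz i : c i = 0.
  apply/eqP; rewrite eq_le c0 andbT.
  have := series_le_lim c0 hs i.+1; rewrite /series /= big_nat_recr //=.
  have : 0 <= \sum_(0 <= k < i) c k by apply: sumr_ge0.
  move=> h1 h2; lra.
rewrite (_ : [set x | _] = set0) ?measure0 //.
apply/seteqP; split => x //=; rewrite /stake_sum eseries0; last first.
  by move=> i _ _; rewrite cz mul0r.
by rewrite lee_fin leNgt t0.
Qed.

Lemma key (t : R) (ts : nat -> R) (cs : nat -> nat -> R) (a : R) :
  p < t ->
  (forall eta, 0 < eta -> exists n0, forall n, (n0 <= n)%N -> `|ts n - t| <= eta) ->
  (forall n, stake_seq (cs n)) ->
  (forall n, ((a - harmonic n)%:E <= win_prob P b (cs n) (ts n))%E) ->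
  exists c, stake_seq c /\ (a%:E <= win_prob P b c t)%E.
Proof.
move=> pt hts hcs ha.
have p1 := p_le1.
have cs01 n i : 0 <= cs n i <= 1.
  case: (hcs n) => c0 _ _; rewrite c0 /=.
  exact: le_trans (stake_small i (hcs n)) (harmonic_le1 i).
have [c [c01 clu]] := cluster_seq cs01.
have c0 i : 0 <= c i by case/andP: (c01 i).
have cser N : series c N <= 1.
  apply/ler_addgt0Pr => e e0.
  have eta0 : 0 < e / N.+1%:R by rewrite divr_gt0 // ltr0Sn.
  have [n [_ hn]] := clu N _ eta0 0%N.
  apply: (@le_trans _ _ (\sum_(0 <= i < N) (cs n i + e / N.+1%:R))).
    apply: ler_sum_nat => i /andP[_ iN].
    have := hn i iN; rewrite ltr_norml => /andP[h1 h2]; set q := e / N.+1%:R in h1 h2 *; lra.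
  rewrite big_split /= sumr_const_nat subn0 lerD //.
    by case: (hcs n) => c0' _ c1'; exact: series_le_lim c0' c1' N.
  rewrite -[_ *+ N]mulr_natr -mulrA ler_piMr ?(ltW e0) // mulrC ler_pdivrMr ?ltr0Sn // mul1r ler_nat.
  exact: leqnSn.
have cm i : c i.+1 <= c i.
  apply/ler_addgt0Pr => e e0.
  have e2 : 0 < e / 2 by rewrite divr_gt0.
  have [n [_ hn]] := clu i.+2 _ e2 0%N.
  have := hn i.+1 (ltnSn _); have := hn i (ltnW (ltnSn _)).
  case: (hcs n) => _ m _; have := m i.
  rewrite !ltr_norml => h0 /andP[h1 h2] /andP[h3 h4]; lra.
have nd : {homo series c : n m / (n <= m)%N >-> n <= m}.
  by move=> m k mk; apply: (nondecreasing_series (P := xpredT) (m := 0%N)) => //.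
have cvc : cvgn (series c).
  by apply: nondecreasing_is_cvgn nd _; exists 1 => _ [n _ <-]; exact: cser.
set s := limn (series c).
have hs : series c @ \oo --> s := cvc.
have s1 : s <= 1 by apply: limr_le cvc _; exact: nearW cser.
have sge i : series c i <= s := series_le_lim c0 hs i.
have s0 : 0 <= s by have := sge 0%N; rewrite /series /= big_geq.
set tau := t - p * (1 - s).
have main k : (a%:E <= P [set x | ((tau - harmonic k)%:E <= stake_sum c b x)%E]
    + (harmonic k)%:E)%E.
  set ep := harmonic k; have ep0 : 0 < ep := harmonic_gt0 k.
  set de := ep / 8; have de0 : 0 < de by rewrite divr_gt0.
  have ep8 : 0 < ep / 8 by rewrite divr_gt0.
  have [N1 _ hN1] := (cvgrPdist_lt _ _).1 hs _ ep8.
  have e3 : 0 < ep * de ^+ 2 / 2 by rewrite !divr_gt0 ?mulr_gt0 ?exprn_gt0.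
  have [N2 _ hN2] := (cvgrPdist_lt _ _).1 (@cvg_harmonic R) _ e3.
  set N := maxn N1 N2.
  have rN : s - series c N <= ep / 8.
    have := hN1 N (leq_maxl _ _); rewrite /= => h; exact: ltW (le_lt_trans (ler_norm _) h).
  have hN : harmonic N <= ep * de ^+ 2 / 2.
    have := hN2 N (leq_maxr _ _); rewrite /= sub0r normrN ger0_norm ?harmonic_ge0 //.
    exact: ltW.
  set eta := ep / 8 / N.+1%:R.
  have eta0 : 0 < eta by rewrite divr_gt0 // ltr0Sn.
  have Neta : N%:R * eta <= ep / 8.
    rewrite /eta mulrA mulrC ler_pdivrMl ?ltr0Sn // ler_wpM2r ?(ltW ep8) // ler_nat.
    exact: leqnSn.
  have [n0 hn0] := hts _ ep8.
  have e2 : 0 < ep / 2 by rewrite divr_gt0.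
  have [n1 _ hn1] := (cvgrPdist_lt _ _).1 (@cvg_harmonic R) _ e2.
  have [n [hn hclose]] := clu N eta eta0 (maxn n0 n1).
  have tn : `|ts n - t| <= ep / 8 := hn0 n (leq_trans (leq_maxl _ _) hn).
  have hn' : harmonic n <= ep / 2.
    have := hn1 n (leq_trans (leq_maxr _ _) hn); rewrite /= sub0r normrN ger0_norm ?harmonic_ge0 //.
    exact: ltW.
  set E1 := [set x | (ts n - 2 * de <= p + \sum_(0 <= i < N) cs n i * (b i x - p))%R].
  set F := [set x | ((tau - ep)%:E <= stake_sum c b x)%E].
  have sub : E1 `<=` F.
    move=> x; rewrite /E1 /F /= => hx.
    apply: le_trans (stake_sum_ge b01 N x c0); rewrite lee_fin.
    have h1 : \sum_(0 <= i < N) cs n i * (b i x - p) <=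
        \sum_(0 <= i < N) c i * (b i x - p) + N%:R * eta.
      rewrite -[N in N%:R](subn0 N) mulr_natl -sumr_const_nat -big_split /=.
      apply: ler_sum_nat => i /andP[_ iN].
      have := hclose i iN; have := bp_le1 i x => hb1 hc1.
      have : (cs n i - c i) * (b i x - p) <= eta.
        apply: le_trans (ler_norm _) _; rewrite normrM -[eta]mulr1.
        by apply: ler_pM => //; exact: ltW.
      lra.
    rewrite /Xs.
    have h2 : p * (s - series c N) <= s - series c N.
      by apply: ler_piMl => //; rewrite subr_ge0.
    move: h2 tn; rewrite /tau /series /= ler_norml.
    set XN := \sum_(0 <= i < N) c i * b i x.
    set sN := \sum_(0 <= i < N) c i.
    rewrite /series /= -/sN in rN.
    move=> h2 /andP[t1 t2].
    have -> : p * (1 - s) = p - p * s by ring.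
    move: h2; have -> : p * (s - sN) = p * s - p * sN by ring.
    move: h1 hx Neta; rewrite /de.
    set Y1 := \sum_(0 <= i < N) cs n i * (b i x - p).
    set Y2 := \sum_(0 <= i < N) c i * (b i x - p).
    set NE := N%:R * eta.
    have h3 : Y2 = XN - p * sN by rewrite /Y2 /XN /sN sumB.
    move=> *; lra.
  have mE1 : measurable E1.
    apply: mge; apply: measurable_realfun.measurable_funD; first exact: measurable_cst.
    apply: measurable_sum => i; apply: measurable_realfun.measurable_funM.
      exact: measurable_cst.
    exact: mbp.
  have PE : (P E1 <= P F)%E.
    by apply: le_measure => //; rewrite inE //; exact: mS.
  have e1 := le_trans (ha n) (tail_bound (ts n) N (hcs n) de0).
  have e4 : de ^- 2 * cs n N <= ep / 2.
    apply: (@le_trans _ _ (de ^- 2 * (ep * de ^+ 2 / 2))).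
      rewrite ler_wpM2l ?invr_ge0 ?exprn_ge0 ?(ltW de0) //.
      exact: le_trans (stake_small N (hcs n)) hN.
    rewrite mulrA mulrC mulrA mulrC le_eqVlt; apply/orP; left; apply/eqP.
    by field; rewrite lt0r_neq0.
  apply: (@le_trans _ _ ((a - harmonic n)%:E + (harmonic n)%:E)%E).
    by rewrite -EFinD subrK.
  apply: le_trans (leeD e1 (_ : (harmonic n)%:E <= (ep / 2)%:E)%E) _.
    by rewrite lee_fin.
  rewrite -addeA; apply: leeD => //.
  rewrite -EFinD lee_fin; move: e4; set z := de ^- 2 * cs n N; move=> e4; lra.
have ha' := cont_above c0 main.
have [s0'|spos] : s = 0 \/ 0 < s by move: s0; rewrite le_eqVlt => /orP[/eqP<-|->]; [left|right].
  exists (cs 0%N); split => //.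
  move: ha'; rewrite /tau s0' subr0 mulr1 zero_case //; last by rewrite subr_gt0.
    by move=> h; apply: le_trans h _; exact: measure_ge0.
  by rewrite -s0'.
exists (fun i => c i / s); split; first exact: scale_stake.
apply: le_trans ha' _; apply: le_measure; rewrite ?inE.
- exact: mS.
- by apply: mS => i; rewrite divr_ge0 // ltW.
apply: scale_sub => //.
rewrite /tau; have : 0 <= (1 - s) * (t - p) by rewrite mulr_ge0 // subr_ge0 // ltW.
have -> : (1 - s) * (t - p) = t - p - s * t + p * s by ring.
have -> : p * (1 - s) = p - p * s by ring.
lra.
Qed.
End Prob.


Section Main.
Context (R : realType) (d : measure_display) (T : measurableType d)
  (P : probability T R) (p : R) (b : nat -> T -> R).
Hypothesis hb : bernoulli_seq P p b.
Hypothesis p0 : 0 <= p.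

Definition e0seq : nat -> R := fun i => if i == 0%N then 1 else 0.

Lemma e0_stake : stake_seq e0seq.
Proof.
split.
- by move=> i; rewrite /e0seq; case: ifP.
- by move=> i; rewrite /e0seq; case: ifP => _ //; rewrite ler01.
apply: cvg_near_cst; exists 1%N => // n /= n1.
rewrite /series /= big_ltn // /e0seq eqxx big1_seq ?addr0 // => i /andP[_].
by rewrite mem_index_iota => /andP[+ _]; case: i.
Qed.

Lemma wp_le1 c t : stake_seq c -> (win_prob P b c t <= 1)%E.
Proof. by case=> c0 _ _; apply: probability_le1; exact: (mS hb _ c0). Qed.

Lemma wp_ge0 c t : (0 <= win_prob P b c t)%E.
Proof. exact: measure_ge0. Qed.

Lemma pi_ub c t : stake_seq c -> (win_prob P b c t <= pi_fun P b t)%E.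
Proof. by move=> hc; apply: ereal_sup_ubound; exists c. Qed.

Lemma pi_le1 t : (pi_fun P b t <= 1)%E.
Proof. by apply: ge_ereal_sup => _ [c hc <-]; exact: wp_le1. Qed.

Lemma pi_ge0 t : (0 <= pi_fun P b t)%E.
Proof. exact: le_trans (wp_ge0 e0seq t) (pi_ub t e0_stake). Qed.

Lemma pi_fin t : pi_fun P b t = (fine (pi_fun P b t))%:E.
Proof.
by rewrite fineK // ge0_fin_numE ?pi_ge0 // (le_lt_trans (pi_le1 t)) ?ltry.
Qed.

Lemma pi_mono s t : s <= t -> (pi_fun P b t <= pi_fun P b s)%E.
Proof.
move=> st; apply: ge_ereal_sup => _ [c hc <-].
apply: le_trans (pi_ub s hc); case: hc => c0 _ _.
apply: le_measure; rewrite ?inE; try exact: (mS hb _ c0).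
by move=> x /=; apply: le_trans; rewrite lee_fin.
Qed.

Lemma approx (t a : R) n : (a%:E <= pi_fun P b t)%E ->
  exists c, stake_seq c /\ ((a - harmonic n)%:E <= win_prob P b c t)%E.
Proof.
move=> h.
have : ((a - harmonic n)%:E < pi_fun P b t)%E.
  apply: lt_le_trans h; rewrite lte_fin ltrBlDr ltrDl; exact: harmonic_gt0.
move/ereal_sup_gtP => [_ [c hc <-] hlt]; exists c; split => //; exact: ltW.
Qed.

Lemma hts_const (t : R) : forall eta : R, 0 < eta -> exists n0, forall n, (n0 <= n)%N -> `|(fun _ : nat => t) n - t| <= eta.
Proof. by move=> eta eta0; exists 0%N => n _; rewrite subrr normr0 ltW. Qed.


Lemma part1 t : p < t -> exists c, stake_seq c /\ pi_fun P b t = win_prob P b c t.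
Proof.
move=> pt; set a := fine (pi_fun P b t).
have H n : exists c, stake_seq c /\ ((a - harmonic n)%:E <= win_prob P b c t)%E.
  by apply: approx; rewrite /a -pi_fin.
have [c [hc hac]] := key hb p0 pt (hts_const t)
  (fun n => (proj2_sig (cid (H n))).1) (fun n => (proj2_sig (cid (H n))).2).
exists c; split => //; apply/le_anti; rewrite pi_ub // andbT.
by rewrite pi_fin.
Qed.

Lemma part2 t : p < t -> pi_fun P b s @[s --> t^'-] --> pi_fun P b t.
Proof.
move=> pt; rewrite (pi_fin t); apply/fine_cvgP; split.
  apply: nearW => s; rewrite ge0_fin_numE ?pi_ge0 //.
  exact: le_lt_trans (pi_le1 s) (ltry _).
set a := fine (pi_fun P b t).
apply/cvgrPdist_le => e e0.
have claim : exists2 de : R, 0 < de &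
    forall s, t - de < s -> s < t -> fine (pi_fun P b s) <= a + e.
  case: (pselect (exists2 de : R, 0 < de &
    forall s, t - de < s -> s < t -> fine (pi_fun P b s) <= a + e)) => // H; exfalso.
  have Hn n : exists s, [/\ t - harmonic n < s, s < t & a + e < fine (pi_fun P b s)].
    apply: contrapT => Hs; apply: H; exists (harmonic n); first exact: harmonic_gt0.
    move=> s h1 h2; rewrite leNgt; apply/negP => h3; apply: Hs; by exists s; split.
  pose ss n := proj1_sig (cid (Hn n)).
  have Hss n : [/\ t - harmonic n < ss n, ss n < t & a + e < fine (pi_fun P b (ss n))].
    exact: (proj2_sig (cid (Hn n))).
  have H2 n : exists c, stake_seq c /\ (((a + e) - harmonic n)%:E <= win_prob P b c (ss n))%E.
    apply: approx; rewrite (pi_fin (ss n)) lee_fin; case: (Hss n) => _ _ h; exact: ltW.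
  have hts : forall eta : R, 0 < eta -> exists n0, forall n, (n0 <= n)%N -> `|ss n - t| <= eta.
    move=> eta eta0; have [n0 _ hn0] := (cvgrPdist_lt _ _).1 (@cvg_harmonic R) _ eta0.
    exists n0 => n nn0; have := hn0 n nn0.
    rewrite /= sub0r normrN ger0_norm ?harmonic_ge0 // => hh.
    case: (Hss n) => h1 h2 _; rewrite ler_norml; apply/andP; split.
      move: h1 hh; rewrite /harmonic /=; set q := (n.+1%:R)^-1; move=> h1 hh; lra.
    lra.
  have [c [hc hac]] := key hb p0 pt hts
    (fun n => (proj2_sig (cid (H2 n))).1) (fun n => (proj2_sig (cid (H2 n))).2).
  have := le_trans hac (pi_ub t hc); rewrite (pi_fin t) lee_fin -/a; lra.
case: claim => de de0 hde.
apply/nbhs_ballP; exists de => // s /= hs slt.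
have ha : a <= fine (pi_fun P b s).
  by rewrite -lee_fin -pi_fin /a -pi_fin; apply: pi_mono; exact: ltW.
have := hde s _ slt; rewrite ler_norml.
move: hs; rewrite /ball /= ltr_norml => /andP[h1 h2] h3.
have {}h3 := h3 _; move: ha h3; set f := fine (pi_fun P b s) => ha h3.
apply/andP; split; first lra.
have : t - de < s by lra.
move/h3; lra.
Qed.
End Main.


End Aux.
Import Aux.

Theorem theorem7 (R : realType) (d : measure_display) (T : measurableType d)
  (P : probability T R) (p : R) (b : nat -> T -> R) :
  bernoulli_seq P p b -> 0 <= p ->
  (forall t : R, p < t -> t <= 1 ->
     exists c : nat -> R, stake_seq c /\ pi_fun P b t = win_prob P b c t) /\
  (forall t : R, p < t -> t <= 1 ->
     pi_fun P b s @[s --> t^'-] --> pi_fun P b t).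
Proof.
move=> hb p0; split => t pt _.
  exact: (part1 hb p0 pt).
exact: (part2 hb p0 pt).
Qed.
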